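(* Let $\mathbf X=\{X_n\}$ and $\mathbf Y=\{Y_n\}$ be general sources such that $$\inf_{m>0}\ \liminf_{n\to\infty}\ \inf_{c\in\mathbb R}\Big\{\Pr\Big\{\log\tfrac{1}{P_{Y_n}(Y_n)}<c+m\Big\}-\Pr\Big\{\log\tfrac{1}{P_{X_n}(X_n)}<c\Big\}\Big\}\ \ge 0 .$$ Then $$\inf_{0<\epsilon<1}\ \liminf_{n\to\infty}\ \inf_{0\le\delta<1-\epsilon}\{c_n^x(\delta+\epsilon)-c_n^y(\delta)\}\ \ge 0 .$$
   Context: Logarithms are natural. A general source $\mathbf X=\{X_n\}_{n\ge1}$ is a sequence of random variables, $X_n$ taking values in a countable set $\mathcal X_n$, with no consistency requirements between different $n$. Similarly $Y_n$ takes values in a countable set $\mathcal Y_n$. For a random variable $Z$ on a countable set $\mathcal Z$ with pmf $P_Z$, list the elements of positive probability as $z_1,z_2,\dots$ (a finite or countably infinite list) with $P_Z(z_1)\ge P_Z(z_2)\ge\cdots$ (ties broken arbitrarily). Set $\delta_0=0$ and $\delta_k=\sum_{i\le k}P_Z(z_i)$. For $\delta\in[0,1)$ define $c^z(\delta)=\log\frac{1}{P_Z(z_k)}$, where $k$ is the unique index with $\delta\in[\delta_{k-1},\delta_k)$. Here $c_n^x$ and $c_n^y$ denote this function built from $P_{X_n}$ and from $P_{Y_n}$ respectively. *)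

(* Defs.v *)
From Stdlib Require Import Reals Lra ClassicalEpsilon.
Open Scope R_scope.

(* A pmf on a countable alphabet, encoded (via an injection) in nat. *)
Definition is_pmf (p : nat -> R) : Prop :=
  (forall k, 0 <= p k) /\ infinite_sum p 1.

Definition series_sum (f : nat -> R) : R :=
  epsilon (inhabits 0) (fun l => infinite_sum f l).

(* Pr{ log (1 / P_Z(Z)) < c } for Z with pmf p. Elements with P_Z = 0
   have infinite self-information and never count. *)
Definition prob_info_lt (p : nat -> R) (c : R) : R :=
  series_sum (fun k =>
    if Rlt_dec 0 (p k) then
      if Rlt_dec (ln (1 / p k)) c then p k else 0
    else 0).

(* Index i is within a list of length len (None = countably infinite). *)
Definition in_len (len : option nat) (i : nat) : Prop :=
  match len with None => True | Some L => (i < L)%nat end.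

(* Indices are 0-based: z i is z_{i+1} of the paper. *)
Definition sorted_enum (p : nat -> R) (len : option nat) (z : nat -> nat) : Prop :=
  (forall i j, in_len len i -> in_len len j -> z i = z j -> i = j) /\
  (forall i, in_len len i -> 0 < p (z i)) /\
  (forall x, 0 < p x -> exists i, in_len len i /\ z i = x) /\
  (forall i j, in_len len i -> in_len len j -> (i < j)%nat -> p (z j) <= p (z i)).

Fixpoint psum (p : nat -> R) (z : nat -> nat) (k : nat) : R :=
  match k with O => 0 | S k' => psum p z k' + p (z k') end.

(* c^z(delta) = log (1 / P(z_k)) with delta in [delta_{k-1}, delta_k)
   (0-based: psum k <= delta < psum (k+1)). *)
Definition cfun (p : nat -> R) (len : option nat) (z : nat -> nat) (delta : R) : R :=
  epsilon (inhabits 0) (fun c => exists k, in_len len k /\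
      psum p z k <= delta < psum p z (S k) /\ c = ln (1 / p (z k))).

(* Main.v *)
Require Import Defs.
From Stdlib Require Import Reals.
Open Scope R_scope.
From Stdlib Require Import Reals Lra Lia List ClassicalEpsilon Classical.
Open Scope R_scope.

Definition lsum (g : nat -> R) (l : list nat) : R :=
  fold_right (fun x acc => g x + acc) 0 l.

Lemma lsum_app g l1 l2 : lsum g (l1 ++ l2) = lsum g l1 + lsum g l2.
Proof. induction l1; simpl; [lra|]. rewrite IHl1. lra. Qed.

Lemma lsum_nonneg g l : (forall x, 0 <= g x) -> 0 <= lsum g l.
Proof. intro H; induction l; simpl; [lra|]. specialize (H a); lra. Qed.

Lemma lsum_le g h l : (forall x, In x l -> g x <= h x) -> lsum g l <= lsum h l.
Proof. induction l; simpl; intros H; [lra|].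
  assert (g a <= h a) by (apply H; auto).
  assert (lsum g l <= lsum h l) by (apply IHl; auto). lra. Qed.

Lemma lsum_sub g l1 : forall l2, (forall x, 0 <= g x) -> NoDup l1 ->
  (forall x, In x l1 -> g x <> 0 -> In x l2) -> lsum g l1 <= lsum g l2.
Proof.
  induction l1 as [|a l1 IH]; intros l2 Hg Hnd Hin; simpl.
  - apply lsum_nonneg; auto.
  - inversion Hnd; subst.
    destruct (Req_dec (g a) 0) as [E|E].
    + rewrite E. assert (lsum g l1 <= lsum g l2).
      { apply IH; auto. intros x Hx Hgx. apply Hin; simpl; auto. }
      lra.
    + assert (Ha : In a l2) by (apply Hin; simpl; auto).
      destruct (in_split _ _ Ha) as [u [v ->]].
      rewrite lsum_app; simpl.
      assert (lsum g l1 <= lsum g (u ++ v)).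
      { apply IH; auto. intros x Hx Hgx.
        assert (Hx2 : In x (u ++ a :: v)) by (apply Hin; simpl; auto).
        apply in_app_or in Hx2. apply in_or_app.
        destruct Hx2 as [?|[?|?]]; auto. subst; contradiction. }
      rewrite lsum_app in H. lra.
Qed.

Lemma sum_f_lsum f n : sum_f_R0 f n = lsum f (seq 0 (S n)).
Proof. induction n. simpl; lra. rewrite (seq_S (S n) 0). rewrite lsum_app. simpl sum_f_R0. rewrite IHn. simpl. lra. Qed.

Lemma psum_lsum p z k : psum p z k = lsum p (map z (seq 0 k)).
Proof. induction k. simpl; lra. rewrite seq_S, map_app, lsum_app. simpl psum. rewrite IHk. simpl. lra. Qed.

Lemma in_len_down len i j : in_len len i -> (j <= i)%nat -> in_len len j.
Proof. destruct len; simpl; auto; lia. Qed.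

Lemma nodup_z p len z K : sorted_enum p len z -> (forall i, (i < K)%nat -> in_len len i) ->
  NoDup (map z (seq 0 K)).
Proof.
  intros [Hinj _] HK. apply NoDup_map_NoDup_ForallPairs; [|apply seq_NoDup].
  intros a b Ha Hb E. apply in_seq in Ha, Hb. apply Hinj; auto; apply HK; lia.
Qed.

Lemma partial_le1 p : is_pmf p -> forall n, sum_f_R0 p n <= 1.
Proof. intros [H0 H1] n. apply growing_ineq; auto.
  intro m. simpl. specialize (H0 (S m)). lra. Qed.

Lemma series_exists f p : is_pmf p -> (forall x, 0 <= f x <= p x) ->
  infinite_sum f (series_sum f).
Proof.
  intros Hp Hf. unfold series_sum. apply epsilon_spec.
  assert (Hg : Un_growing (sum_f_R0 f)).
  { intro m. simpl. specialize (Hf (S m)). lra. }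
  destruct (growing_cv _ Hg) as [l Hl].
  - exists 1. intros x [i ->].
    apply Rle_trans with (sum_f_R0 p i); [|apply partial_le1; auto].
    apply sum_Rle. intros; apply Hf.
  - exists l; exact Hl.
Qed.

Lemma lim_ub (u : nat -> R) l B : Un_cv u l -> (forall n, u n <= B) -> l <= B.
Proof.
  intros Hc Hb. destruct (Rle_dec l B) as [|Hn]; auto.
  destruct (Hc (l - B)) as [N HN]; [lra|].
  specialize (HN N (le_n _)). specialize (Hb N). unfold R_dist, Rdist in HN.
  apply Rabs_def2 in HN. lra.
Qed.

Lemma cover p len z : sorted_enum p len z -> forall N, exists K,
  (forall i, (i < K)%nat -> in_len len i) /\
  (forall x, (x <= N)%nat -> 0 < p x -> exists i, (i < K)%nat /\ z i = x).
Proof.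
  intros Hs. destruct Hs as [_ [_ [Hsur _]]].
  induction N as [|N IH].
  - destruct (Rlt_dec 0 (p 0%nat)) as [H|H].
    + destruct (Hsur _ H) as [i [Hi Hz]]. exists (S i). split.
      * intros j Hj. apply in_len_down with i; auto; lia.
      * intros x Hx Hpx. assert (x = 0%nat) by lia. subst. exists i; split; auto.
    + exists 0%nat. split; [intros; lia|]. intros x Hx Hpx. assert (x = 0%nat) by lia. subst. contradiction.
  - destruct IH as [K [HK1 HK2]].
    destruct (Rlt_dec 0 (p (S N))) as [H|H].
    + destruct (Hsur _ H) as [i [Hi Hz]]. exists (Nat.max K (S i)). split.
      * intros j Hj. destruct (Nat.lt_ge_cases j K); auto. apply in_len_down with i; auto; lia.
      * intros x Hx Hpx. destruct (Nat.eq_dec x (S N)).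
        -- subst. exists i; split; auto; lia.
        -- destruct (HK2 x) as [j [Hj Hzj]]; auto; try lia. exists j; split; auto; lia.
    + exists K. split; auto. intros x Hx Hpx. destruct (Nat.eq_dec x (S N)).
      * subst; contradiction.
      * apply HK2; auto; lia.
Qed.

Lemma psum_big p len z : is_pmf p -> sorted_enum p len z -> forall t, t < 1 ->
  exists K, (forall i, (i < K)%nat -> in_len len i) /\ t < psum p z K.
Proof.
  intros [Hp0 Hp1] Hs t Ht.
  destruct (Hp1 (1 - t)) as [N HN]; [lra|].
  specialize (HN N (le_n _)). unfold R_dist, Rdist in HN. apply Rabs_def2 in HN.
  destruct (cover p len z Hs N) as [K [HK1 HK2]].
  exists K; split; auto.
  rewrite psum_lsum. apply Rlt_le_trans with (lsum p (seq 0 (S N))).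
  - rewrite <- sum_f_lsum. lra.
  - apply lsum_sub; auto. apply seq_NoDup.
    intros x Hx Hpx. apply in_seq in Hx. destruct (HK2 x) as [i [Hi Hz]]; try lia.
    + specialize (Hp0 x). lra.
    + rewrite <- Hz. apply in_map. apply in_seq. lia.
Qed.

Lemma find_k p z K d : psum p z 0 <= d -> d < psum p z K ->
  exists k, (k < K)%nat /\ psum p z k <= d < psum p z (S k).
Proof.
  induction K; intros H0 H1. simpl in *; lra.
  destruct (Rle_dec (psum p z K) d).
  - exists K; split; [lia|]; split; auto.
  - destruct IHK as [k [Hk Hk2]]; auto. lra. exists k; split; auto.
Qed.

Lemma cfun_spec p len z d : is_pmf p -> sorted_enum p len z -> 0 <= d < 1 ->
  exists k, in_len len k /\ psum p z k <= d < psum p z (S k) /\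
     cfun p len z d = ln (1 / p (z k)).
Proof.
  intros Hp Hs Hd. unfold cfun.
  match goal with |- context [epsilon ?i ?P] => assert (HE : exists c, P c) end.
  { destruct (psum_big p len z Hp Hs d) as [K [HK1 HK2]]; [lra|].
    destruct (find_k p z K d) as [k [Hk Hk2]]; simpl; try lra; auto.
    exists (ln (1 / p (z k))), k. split; auto. }
  destruct (epsilon_spec (inhabits 0) _ HE) as [k [H1 [H2 H3]]]. exists k; auto.
Qed.

Definition fi (p : nat -> R) (c : R) (x : nat) : R :=
  if Rlt_dec 0 (p x) then if Rlt_dec (ln (1 / p x)) c then p x else 0 else 0.

Lemma fi_bound p c x : is_pmf p -> 0 <= fi p c x <= p x.
Proof. intros [H0 _]. specialize (H0 x). unfold fi.
  destruct (Rlt_dec 0 (p x)); [destruct (Rlt_dec (ln (1 / p x)) c)|]; lra. Qed.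

Lemma ln_inv_lt a b : 0 < a -> 0 < b -> ln (1 / a) < ln (1 / b) -> b < a.
Proof. intros Ha Hb H. unfold Rdiv in H. rewrite !Rmult_1_l, !ln_Rinv in H by auto.
  destruct (Rlt_dec b a) as [|Hn]; auto. exfalso.
  destruct (Rle_lt_or_eq_dec a b) as [Hl|He]; [lra| |].
  - pose proof (ln_increasing _ _ Ha Hl). lra.
  - subst; lra. Qed.

Lemma ln_inv_le a b : 0 < b -> b <= a -> ln (1 / a) <= ln (1 / b).
Proof. intros Hb H. unfold Rdiv. rewrite !Rmult_1_l, !ln_Rinv by lra.
  destruct (Rle_lt_or_eq_dec b a) as [Hl|He]; auto.
  - pose proof (ln_increasing _ _ Hb Hl). lra.
  - subst; lra. Qed.

Lemma lemA p len z j : is_pmf p -> sorted_enum p len z -> in_len len j ->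
  prob_info_lt p (ln (1 / p (z j))) <= psum p z j.
Proof.
  intros Hp Hs Hj. unfold prob_info_lt. fold (fi p (ln (1 / p (z j)))).
  pose proof (series_exists (fi p (ln (1 / p (z j)))) p Hp (fun x => fi_bound _ _ x Hp)) as Hc.
  apply (lim_ub _ _ _ Hc). intro N.
  destruct Hs as [Hinj [Hpos [Hsur Hsort]]].
  assert (Hall : forall i, (i < j)%nat -> in_len len i) by (intros; apply in_len_down with j; auto; lia).
  rewrite sum_f_lsum, psum_lsum.
  apply Rle_trans with (lsum (fi p (ln (1 / p (z j)))) (map z (seq 0 j))).
  - apply lsum_sub. intro; apply fi_bound; auto. apply seq_NoDup.
    intros x _ Hx. unfold fi in Hx.
    destruct (Rlt_dec 0 (p x)) as [Hpx|]; [|lra].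
    destruct (Rlt_dec (ln (1 / p x)) (ln (1 / p (z j)))) as [Hl|]; [|lra].
    apply ln_inv_lt in Hl; auto.
    destruct (Hsur x Hpx) as [i [Hi Hz]]. subst x.
    destruct (Nat.lt_ge_cases i j) as [Hij|Hij].
    + apply in_map, in_seq; lia.
    + exfalso. destruct (Nat.eq_dec i j). subst; lra.
      assert (p (z i) <= p (z j)) by (apply Hsort; auto; lia). lra.
  - apply lsum_le. intros; apply fi_bound; auto.
Qed.

Lemma bound_z (z : nat -> nat) k : exists N, forall i, (i <= k)%nat -> (z i <= N)%nat.
Proof. induction k. exists (z 0%nat). intros i Hi. assert (i = 0%nat) by lia. subst; lia.
  destruct IHk as [N HN]. exists (Nat.max N (z (S k))). intros i Hi.
  destruct (Nat.eq_dec i (S k)). subst; lia. specialize (HN i). lia. Qed.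

Lemma lsum_ext_in g h l : (forall x, In x l -> g x = h x) -> lsum g l = lsum h l.
Proof. induction l; simpl; auto. intros H. rewrite H, IHl; auto. Qed.

Lemma lemB p len z k c : is_pmf p -> sorted_enum p len z -> in_len len k ->
  ln (1 / p (z k)) < c -> psum p z (S k) <= prob_info_lt p c.
Proof.
  intros Hp Hs Hk Hc. unfold prob_info_lt. fold (fi p c).
  pose proof (series_exists (fi p c) p Hp (fun x => fi_bound _ _ x Hp)) as Hl.
  assert (Hall : forall i, (i < S k)%nat -> in_len len i) by (intros; apply in_len_down with k; auto; lia).
  destruct (bound_z z k) as [N HN].
  apply Rle_trans with (sum_f_R0 (fi p c) N).
  2:{ apply growing_ineq; auto. intro m. simpl. pose proof (fi_bound p c (S m) Hp). lra. }
  pose proof Hs as [Hinj [Hpos [Hsur Hsort]]].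
  rewrite sum_f_lsum, psum_lsum.
  apply Rle_trans with (lsum (fi p c) (map z (seq 0 (S k)))).
  - right. apply lsum_ext_in. intros x Hx. apply in_map_iff in Hx. destruct Hx as [i [<- Hi]].
    apply in_seq in Hi. unfold fi.
    assert (Hpi : p (z k) <= p (z i)).
    { destruct (Nat.eq_dec i k). subst; lra. apply Hsort; [apply Hall; lia|auto|lia]. }
    assert (Hk0 := Hpos k Hk).
    destruct (Rlt_dec 0 (p (z i))) as [H0|H0]; [|lra].
    destruct (Rlt_dec (ln (1 / p (z i))) c) as [|Hn]; auto.
    exfalso. pose proof (ln_inv_le _ _ Hk0 Hpi). lra.
  - apply lsum_sub. intro; apply fi_bound; auto. eapply nodup_z; eauto.
    intros x Hx _. apply in_map_iff in Hx. destruct Hx as [i [<- Hi]].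
    apply in_seq in Hi. apply in_seq. specialize (HN i). lia.
Qed.

Theorem lemma7
  (PX PY : nat -> nat -> R)
  (lenX lenY : nat -> option nat) (zX zY : nat -> nat -> nat)
  (hPX : forall n, is_pmf (PX n)) (hPY : forall n, is_pmf (PY n))
  (hzX : forall n, sorted_enum (PX n) (lenX n) (zX n))
  (hzY : forall n, sorted_enum (PY n) (lenY n) (zY n))
  (* inf_{m>0} liminf_n inf_c { Pr{iY < c+m} - Pr{iX < c} } >= 0 *)
  (hyp : forall m, 0 < m -> forall eta, 0 < eta ->
     exists N, forall n, (N <= n)%nat -> forall c : R,
       prob_info_lt (PY n) (c + m) - prob_info_lt (PX n) c >= - eta) :
  (* inf_{0<eps<1} liminf_n inf_{0<=delta<1-eps} { c^x_n(delta+eps) - c^y_n(delta) } >= 0 *)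
  forall eps, 0 < eps < 1 -> forall eta, 0 < eta ->
    exists N, forall n, (N <= n)%nat -> forall delta : R, 0 <= delta < 1 - eps ->
      cfun (PX n) (lenX n) (zX n) (delta + eps) - cfun (PY n) (lenY n) (zY n) delta >= - eta.
Proof.
  intros eps Heps eta Heta.
  destruct (hyp eta Heta eps (proj1 Heps)) as [N HN].
  exists N. intros n Hn delta Hd.
  destruct (cfun_spec (PX n) (lenX n) (zX n) (delta + eps) (hPX n) (hzX n)) as [k [Hk [Hk2 ->]]]; [lra|].
  destruct (cfun_spec (PY n) (lenY n) (zY n) delta (hPY n) (hzY n)) as [j [Hj [Hj2 ->]]]; [lra|].
  set (a := ln (1 / PX n (zX n k))). set (b := ln (1 / PY n (zY n j))).
  destruct (Rge_dec (a - b) (- eta)) as [|Hlt]; auto. exfalso.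
  specialize (HN n Hn (b - eta)).
  replace (b - eta + eta) with b in HN by ring.
  pose proof (lemA (PY n) (lenY n) (zY n) j (hPY n) (hzY n) Hj) as HA.
  pose proof (lemB (PX n) (lenX n) (zX n) k (b - eta) (hPX n) (hzX n) Hk) as HB.
  fold a b in HA, HB. assert (a < b - eta) by lra.
  specialize (HB H). lra.
Qed.
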